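(* Let $V\subseteq\mathbb{R}^n$ be convex, $F\colon V\to\mathbb{R}^n$ globally Lipschitz, and define $\tilde F\colon V^N\to\mathbb{R}^{nN}$ by $\tilde F(u)=(F(u_1)^T,\dots,F(u_N)^T)^T$ for $u=(u_1^T,\dots,u_N^T)^T$, $u_i\in V$. Let $D=\operatorname{diag}(d_1,\dots,d_n)$ with $d_i>0$, and let $L\in\mathbb{R}^{N\times N}$ be a graph Laplacian: symmetric, with nonpositive off-diagonal entries, and $L\mathbf{1}=0$. Fix $1\le p\le\infty$ and a positive diagonal $n\times n$ matrix $Q$, and let $c=M_{p,Q}[F]$. Then for any two continuously differentiable solutions $u,v\colon[0,\infty)\to V^N$ of \[ \dot u(t)=\tilde F(u(t))-(L\otimes D)u(t), \] we have $\|u(t)-v(t)\|_{p,Q}\le e^{ct}\|u(0)-v(0)\|_{p,Q}$ for all $t\ge0$.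
   Context: On $\mathbb{R}^n$, $\|x\|_{p,Q}=\|Qx\|_p$; on $\mathbb{R}^{nN}$, $\|u\|_{p,Q}=\big\|(\|Qu_1\|_p,\dots,\|Qu_N\|_p)^T\big\|_p$. The logarithmic Lipschitz constant is $M_{p,Q}[F]=\lim_{h\to0^+}\sup_{x\neq y\in V}\frac1h\left(\frac{\|x-y+h(F(x)-F(y))\|_{p,Q}}{\|x-y\|_{p,Q}}-1\right)$. $\mathbf{1}=(1,\dots,1)^T$ and $\otimes$ is the Kronecker product. *)

(* Defs.v *)
From HB Require Import structures.
From mathcomp Require Import all_boot all_order all_algebra.
From mathcomp Require Import all_classical all_reals all_analysis.
Set Implicit Arguments. Unset Strict Implicit. Unset Printing Implicit Defensive.
Import Order.TTheory GRing.Theory Num.Theory.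
Import numFieldNormedType.Exports.
Local Open Scope classical_set_scope.
Local Open Scope ring_scope.

(* Vectors of R^n are column vectors 'cV[R]_n.
   A vector u = (u_1^T,...,u_N^T)^T of R^{nN} is stored as the matrix
   'M[R]_(n, N) whose i-th column is u_i. *)

Section Defs.
Variable R : realType.

Definition pnorm (p : \bar R) (n : nat) (x : 'cV[R]_n) : R :=
  match p with
  | r%:E => (\sum_(i < n) `|x i ord0| `^ r) `^ r^-1
  | _ => \big[Num.max/0]_(i < n) `|x i ord0|
  end.

Definition pQnorm (p : \bar R) (n : nat) (Q : 'M[R]_n) (x : 'cV[R]_n) : R :=
  pnorm p (Q *m x).

Definition blockQnorm (p : \bar R) (n N : nat) (Q : 'M[R]_n) (u : 'M[R]_(n, N)) : R :=
  pnorm p (\col_(i < N) pQnorm p Q (col i u)).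

Definition convex_subset (n : nat) (V : set 'cV[R]_n) : Prop :=
  forall x y, V x -> V y -> forall l : R, 0 <= l <= 1 -> V (l *: x + (1 - l) *: y).

(* global Lipschitz continuity of F on V (w.r.t. the max norm; all norms equivalent) *)
Definition glob_lipschitz_on (n : nat) (V : set 'cV[R]_n) (F : 'cV[R]_n -> 'cV[R]_n) : Prop :=
  exists K : R, forall x y, V x -> V y -> `|F x - F y| <= K * `|x - y|.

Definition pos_diag (n : nat) (A : 'M[R]_n) : Prop :=
  is_diag_mx A /\ forall i, 0 < A i i.

Definition graph_laplacian (N : nat) (L : 'M[R]_N) : Prop :=
  [/\ L^T = L, (forall i j, i != j -> L i j <= 0) & L *m (const_mx 1 : 'cV[R]_N) = 0].

Definition logLip_quot (p : \bar R) (n : nat) (Q : 'M[R]_n)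
  (V : set 'cV[R]_n) (F : 'cV[R]_n -> 'cV[R]_n) (h : R) : \bar R :=
  ereal_sup [set r : \bar R | exists x y, [/\ V x, V y, x != y &
     r = (h^-1 * (pQnorm p Q (x - y + h *: (F x - F y)) / pQnorm p Q (x - y) - 1))%:E]].

Definition logLip_eq (p : \bar R) (n : nat) (Q : 'M[R]_n)
  (V : set 'cV[R]_n) (F : 'cV[R]_n -> 'cV[R]_n) (c : R) : Prop :=
  logLip_quot p Q V F h @[h --> 0^'+] --> c%:E.

Definition Ftilde (n N : nat) (F : 'cV[R]_n -> 'cV[R]_n) (u : 'M[R]_(n, N)) : 'M[R]_(n, N) :=
  \matrix_(k < n, i < N) F (col i u) k ord0.

Definition kron_apply (n N : nat) (L : 'M[R]_N) (D : 'M[R]_n) (u : 'M[R]_(n, N)) : 'M[R]_(n, N) :=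
  \matrix_(k < n, i < N) \sum_(j < N) \sum_(l < n) L i j * D k l * u l j.

Definition rhs (n N : nat) (F : 'cV[R]_n -> 'cV[R]_n) (L : 'M[R]_N) (D : 'M[R]_n)
  (u : 'M[R]_(n, N)) : 'M[R]_(n, N) := Ftilde F u - kron_apply L D u.

(* u : [0,oo) -> V^N is a continuously differentiable solution of
   u' = \tilde F(u) - (L ⊗ D) u.  Differentiable at every t > 0 with the ODE,
   right-differentiable at 0 with the ODE; the derivative t |-> rhs (u t) is
   then automatically continuous on [0,oo). *)
Definition is_ode_solution (n N : nat) (V : set 'cV[R]_n) (F : 'cV[R]_n -> 'cV[R]_n)
  (L : 'M[R]_N) (D : 'M[R]_n) (u : R -> 'M[R]_(n, N)) : Prop :=
  [/\ (forall t, 0 <= t -> forall i, V (col i (u t))),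
      (forall t, 0 < t -> derivable u t 1 /\ 'D_1 u t = rhs F L D (u t)) &
      (fun h => h^-1 *: (u h - u 0)) @ 0^'+ --> rhs F L D (u 0)].

End Defs.

(* Main.v *)
Require Import Defs.
From HB Require Import structures.
From mathcomp Require Import all_boot all_order all_algebra.
From mathcomp Require Import all_classical all_reals all_analysis.
From mathcomp Require Import ring lra.
Import Order.TTheory GRing.Theory Num.Theory.
Import numFieldNormedType.Exports.
Local Open Scope classical_set_scope.
Local Open Scope ring_scope.
Set Implicit Arguments. Unset Strict Implicit. Unset Printing Implicit Defensive.

Section FN.
Variable R : realType.

Lemma p_cases (p : \bar R) : (1 <= p)%E ->
  (exists2 r : R, 1 <= r & p = r%:E) \/ p = +oo%E.
Proof.
case: p => [r||] p1; [left; exists r => //; by rewrite -lee_fin | by right | by []].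
Qed.

Lemma conv2 (r t x y : R) : 1 <= r -> 0 <= t -> t <= 1 -> 0 <= x -> 0 <= y ->
  (t * x + (1 - t) * y) `^ r <= t * x `^ r + (1 - t) * y `^ r.
Proof.
move=> r1 t0 t1 x0 y0.
have := @convex_powR R r r1 (Itv01 t0 t1) x y.
rewrite !convRE /=.
apply; rewrite inE /= in_itv /= andbT //.
Qed.

Definition fn (p : \bar R) (I : finType) (f : I -> R) : R :=
  match p with
  | r%:E => (\sum_i `|f i| `^ r) `^ r^-1
  | _ => \big[Num.max/0]_i `|f i|
  end.

Lemma bigmax_ge0 (I : finType) (f : I -> R) : 0 <= \big[Num.max/0]_i `|f i|.
Proof. by apply: (big_ind (fun x => 0 <= x)) => // a b ha hb; rewrite le_max ha. Qed.

Lemma fn_ge0 p (I : finType) (f : I -> R) : 0 <= fn p f.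
Proof. case: p => [r||] /=; [exact: powR_ge0| exact: bigmax_ge0 ..]. Qed.

Lemma powRK (r x : R) : 0 < r -> 0 <= x -> (x `^ r) `^ r^-1 = x.
Proof. by move=> r0 x0; rewrite -powRrM mulfV ?gt_eqF // powRr1. Qed.

Lemma powRKV (r x : R) : 0 < r -> 0 <= x -> (x `^ r^-1) `^ r = x.
Proof. by move=> r0 x0; rewrite -powRrM mulVf ?gt_eqF // powRr1. Qed.

Lemma term_le_sum (I : finType) (g : I -> R) i : (forall j, 0 <= g j) -> g i <= \sum_j g j.
Proof.
move=> g0; rewrite (bigD1 i) //= lerDl; exact: sumr_ge0.
Qed.

Lemma fn_entry p (I : finType) (f : I -> R) i : (1 <= p)%E -> `|f i| <= fn p f.
Proof.
case/p_cases => [[r p1 ->]|->] /=; last by rewrite (le_bigmax _ (fun i => `|f i|)).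
have r0 : 0 < r by apply: lt_le_trans p1.
rewrite -[X in X <= _](powRK r0 (normr_ge0 (f i))).
have ri : 0 <= r^-1 by rewrite invr_ge0 ltW.
have S0 : 0 <= \sum_j `|f j| `^ r by apply: sumr_ge0 => j _; apply: powR_ge0.
apply: ge0_ler_powR => //; rewrite ?nnegrE ?powR_ge0 //.
by apply: (@term_le_sum _ (fun j => `|f j| `^ r) i) => j; apply: powR_ge0.
Qed.

Lemma fn_eq0 p (I : finType) (f : I -> R) i : (1 <= p)%E -> fn p f = 0 -> f i = 0.
Proof.
move=> p1 h; apply/normr0_eq0/le_anti; rewrite normr_ge0 andbT -h; exact: fn_entry.
Qed.

Lemma fn_mono p (I : finType) (f g : I -> R) : (1 <= p)%E ->
  (forall i, `|f i| <= `|g i|) -> fn p f <= fn p g.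
Proof.
case/p_cases => [[r p1 ->]|->] /= h; last first.
  by apply: le_bigmax2 => i _; exact: h.
have r0 : 0 < r by apply: lt_le_trans p1.
have ri : 0 <= r^-1 by rewrite invr_ge0 ltW.
apply: ge0_ler_powR => //; rewrite ?nnegrE ?sumr_ge0 //; try by move=> j _; apply: powR_ge0.
apply: ler_sum => i _; apply: ge0_ler_powR; rewrite ?nnegrE //; exact: ltW.
Qed.

Lemma fn_scale p (I : finType) (f : I -> R) a : (1 <= p)%E -> 0 <= a ->
  fn p (fun i => a * f i) = a * fn p f.
Proof.
case/p_cases => [[r p1 ->]|->] /= a0; last first.
  rewrite (big_morph (fun x => a * x) (id1 := 0) (op1 := Num.max)).
  - by apply: eq_bigr => i _; rewrite normrM ger0_norm.
  - by move=> x y; rewrite maxr_pMr.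
  - by rewrite mulr0.
have r0 : 0 < r by apply: lt_le_trans p1.
under eq_bigr do rewrite normrM ger0_norm // powRM //.
have S0 : 0 <= \sum_j `|f j| `^ r by apply: sumr_ge0 => j _; apply: powR_ge0.
by rewrite -mulr_sumr powRM ?powR_ge0 // (powRK r0 a0).
Qed.

Lemma mink_core (I : finType) (f g : I -> R) (r a b : R) : 1 <= r -> 0 < a -> 0 < b ->
  \sum_i `|f i| `^ r = a `^ r -> \sum_i `|g i| `^ r = b `^ r ->
  \sum_i `|f i + g i| `^ r <= (a + b) `^ r.
Proof.
move=> p1 a0 b0 Sa Sb.
have r0 : 0 < r by apply: lt_le_trans p1.
have ab0 : 0 < a + b := addr_gt0 a0 b0.
have a0' : 0 <= a := ltW a0.
have b0' : 0 <= b := ltW b0.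
have ab0' : 0 <= a + b := ltW ab0.
have abn : a + b != 0 := lt0r_neq0 ab0.
have [t [t0 t1 t1' et]] : exists t, [/\ 0 <= t, t <= 1, 1 - t = b / (a + b) & t = a / (a + b)].
  exists (a / (a + b)); split => //; first exact: divr_ge0.
    by rewrite ler_pdivrMr // mul1r lerDl.
  by apply: (mulIf abn); rewrite mulrBl mul1r !divfK // addrC addKr.
have t10 : 0 <= 1 - t by rewrite subr_ge0.
have key : forall i, `|f i + g i| `^ r <=
   (a + b) `^ r * (t * (`|f i| / a) `^ r + (1 - t) * (`|g i| / b) `^ r).
  move=> i.
  have fa : 0 <= `|f i| / a by rewrite divr_ge0.
  have gb : 0 <= `|g i| / b by rewrite divr_ge0.
  have e : `|f i| + `|g i| = (a + b) * (t * (`|f i| / a) + (1 - t) * (`|g i| / b)).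
    rewrite t1' et; field; by rewrite ?(lt0r_neq0 a0) ?(lt0r_neq0 b0) ?abn.
  apply: (le_trans (y := (`|f i| + `|g i|) `^ r)).
    by apply: (ge0_ler_powR (ltW r0)); rewrite /= ?nnegrE ?addr_ge0 ?ler_normD.
  have Z0 : 0 <= t * (`|f i| / a) + (1 - t) * (`|g i| / b).
    by rewrite addr_ge0 // mulr_ge0.
  rewrite e (powRM _ ab0' Z0).
  apply: ler_wpM2l; first exact: powR_ge0.
  exact: conv2.
apply: (le_trans (ler_sum _ (fun i _ => key i))).
rewrite -mulr_sumr big_split /= -!mulr_sumr.
have ai : 0 <= a^-1 by rewrite invr_ge0.
have bi : 0 <= b^-1 by rewrite invr_ge0.
have hf : \sum_i (`|f i| / a) `^ r = 1.
  under eq_bigr do rewrite (powRM _ (normr_ge0 _) ai).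
  by rewrite -mulr_suml Sa -(powRM _ a0' ai) mulfV ?(lt0r_neq0 a0) // powR1.
have hg : \sum_i (`|g i| / b) `^ r = 1.
  under eq_bigr do rewrite (powRM _ (normr_ge0 _) bi).
  by rewrite -mulr_suml Sb -(powRM _ b0' bi) mulfV ?(lt0r_neq0 b0) // powR1.
by rewrite hf hg !mulr1 subrKC mulr1.
Qed.

Lemma fn_triangle p (I : finType) (f g : I -> R) : (1 <= p)%E ->
  fn p (fun i => f i + g i) <= fn p f + fn p g.
Proof.
move=> p1.
have [fz|fnz] := eqVneq (fn p f) 0.
  rewrite fz add0r; apply: fn_mono => // i; by rewrite (fn_eq0 i p1 fz) add0r.
have [gz|gnz] := eqVneq (fn p g) 0.
  rewrite gz addr0; apply: fn_mono => // i; by rewrite (fn_eq0 i p1 gz) addr0.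
have fp : 0 < fn p f by rewrite lt0r fnz fn_ge0.
have gp : 0 < fn p g by rewrite lt0r gnz fn_ge0.
case/p_cases: p1 fp gp => [[r p1 ->]|->] /= fp gp; last first.
  apply: bigmax_le; first by rewrite addr_ge0 // bigmax_ge0.
  move=> i _; apply: (le_trans (ler_normD _ _)); apply: lerD.
    by rewrite (le_bigmax _ (fun i => `|f i|)).
  by rewrite (le_bigmax _ (fun i => `|g i|)).
have r0 : 0 < r by apply: lt_le_trans p1.
have ab0' : 0 <= (\sum_i `|f i| `^ r) `^ r^-1 + (\sum_i `|g i| `^ r) `^ r^-1.
  exact: addr_ge0 (powR_ge0 _ _) (powR_ge0 _ _).
rewrite -[X in _ <= X](powRK r0 ab0').
have ri : 0 <= r^-1 by rewrite invr_ge0 ltW.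
have S0 : 0 <= \sum_j `|f j + g j| `^ r by apply: sumr_ge0 => j _; apply: powR_ge0.
apply: ge0_ler_powR => //; rewrite ?nnegrE ?powR_ge0 //.
have Sf : 0 <= \sum_j `|f j| `^ r by apply: sumr_ge0 => j _; apply: powR_ge0.
have Sg : 0 <= \sum_j `|g j| `^ r by apply: sumr_ge0 => j _; apply: powR_ge0.
exact: (mink_core p1 fp gp (esym (powRKV r0 Sf)) (esym (powRKV r0 Sg))).
Qed.

End FN.

Section FN2.
Variable R : realType.

Lemma fn_ext (p : \bar R) (I : finType) (f g : I -> R) : f =1 g -> fn p f = fn p g.
Proof. by move=> h; congr fn; apply: funext. Qed.

Lemma fn_eq_abs (p : \bar R) (I : finType) (f g : I -> R) : (1 <= p)%E ->
  (forall i, `|f i| = `|g i|) -> fn p f = fn p g.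
Proof.
move=> p1 h; apply/le_anti; rewrite !fn_mono // => i; by rewrite h.
Qed.

Lemma fn_pair (p : \bar R) (I J : finType) (g : I -> J -> R) : (1 <= p)%E ->
  fn p (fun i => fn p (fun j => g i j)) = fn p (fun ij : I * J => g ij.1 ij.2).
Proof.
move=> p1; case/p_cases: (p1) => [[r r1 ->]|->] /=.
  have r0 : 0 < r by apply: lt_le_trans r1.
  congr (_ `^ _).
  rewrite -(pair_big predT predT (fun i j => `|g i j| `^ r)) /=.
  apply: eq_bigr => i _.
  have S0 : 0 <= \sum_j `|g i j| `^ r by apply: sumr_ge0 => j _; apply: powR_ge0.
  by rewrite ger0_norm ?powR_ge0 // (powRKV r0 S0).
apply/le_anti/andP; split.
  apply: bigmax_le; first exact: bigmax_ge0.
  move=> i _; rewrite [X in X <= _]ger0_norm ?bigmax_ge0 //.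
  apply: bigmax_le; first exact: bigmax_ge0.
  move=> j _; by rewrite (le_bigmax _ (fun ij : I * J => `|g ij.1 ij.2|) (i, j)).
apply: bigmax_le; first exact: bigmax_ge0.
move=> [i j] _ /=.
apply: (le_trans (y := `|\big[Num.max/0]_j `|g i j| |)).
  by rewrite [X in _ <= X]ger0_norm ?bigmax_ge0 // (le_bigmax _ (fun j => `|g i j|) j).
by rewrite (le_bigmax _ (fun i => `|\big[Num.max/0]_j `|g i j| |) i).
Qed.

Lemma diagM (n m : nat) (A : 'M[R]_n) (x : 'M[R]_(n, m)) k j :
  is_diag_mx A -> (A *m x) k j = A k k * x k j.
Proof.
move=> /is_diag_mxP dA; rewrite mxE (bigD1 k) //= big1 ?addr0 // => l lk.
by rewrite dA ?mul0r // eq_sym.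
Qed.

Lemma pQnormE (p : \bar R) n (Q : 'M[R]_n) x : is_diag_mx Q ->
  pQnorm p Q x = fn p (fun k => Q k k * x k ord0).
Proof.
move=> dQ; change (fn p (fun k => (Q *m x) k ord0) = fn p (fun k => Q k k * x k ord0)).
by apply: fn_ext => k; rewrite diagM.
Qed.

Lemma blockE (p : \bar R) n N (Q : 'M[R]_n) (w : 'M[R]_(n, N)) : is_diag_mx Q ->
  blockQnorm p Q w = fn p (fun i : 'I_N => fn p (fun k : 'I_n => Q k k * w k i)).
Proof.
move=> dQ; transitivity (fn p (fun i : 'I_N => (\col_(i < N) pQnorm p Q (col i w)) i ord0)); first by [].
apply: fn_ext => i; rewrite mxE pQnormE //; apply: fn_ext => k; by rewrite mxE.
Qed.

Lemma blockF (p : \bar R) n N (Q : 'M[R]_n) (w : 'M[R]_(n, N)) : is_diag_mx Q ->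
  (1 <= p)%E ->
  blockQnorm p Q w = fn p (fun ik : 'I_N * 'I_n => Q ik.2 ik.2 * w ik.2 ik.1).
Proof. by move=> dQ p1; rewrite blockE // fn_pair. Qed.

End FN2.

Section FN3.
Variable R : realType.

Lemma fn_bound (p : \bar R) (I : finType) (f : I -> R) (M : R) : (1 <= p)%E -> 0 <= M ->
  (forall i, `|f i| <= M) -> fn p f <= (#|I|%:R + 1) * M.
Proof.
move=> p1 M0 hM.
have k1 : 1 <= (#|I|%:R + 1 : R) by rewrite lerDr.
case/p_cases: p1 => [[r r1 ->]|->] /=; last first.
  apply: bigmax_le; first by rewrite mulr_ge0 // (le_trans ler01 k1).
  move=> i _; apply: (le_trans (hM i)); by rewrite ler_peMl.
have r0 : 0 < r by apply: lt_le_trans r1.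
have ri : 0 <= r^-1 by rewrite invr_ge0 ltW.
have Mr : 0 <= M `^ r := powR_ge0 _ _.
have k0 : 0 <= (#|I|%:R + 1 : R) := le_trans ler01 k1.
have S0 : 0 <= \sum_i `|f i| `^ r by apply: sumr_ge0 => j _; apply: powR_ge0.
apply: (le_trans (y := ((#|I|%:R + 1) * M `^ r) `^ r^-1)).
  apply: (ge0_ler_powR ri); rewrite ?nnegrE ?mulr_ge0 //.
  apply: (le_trans (y := \sum_(i : I) M `^ r)).
    apply: ler_sum => i _; apply: (ge0_ler_powR (ltW r0)); rewrite ?nnegrE //.
  apply: (le_trans (y := #|I|%:R * M `^ r)); first by rewrite sumr_const mulr_natl.
  by rewrite mulrDl mul1r lerDl.
rewrite (powRM _ k0 Mr) (powRK r0 M0); apply: ler_wpM2r => //.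
rewrite -[X in _ <= X](powRr1 k0); apply: ler_powR => //.
by rewrite invf_le1.
Qed.

Variables (p : \bar R) (n N : nat) (Q : 'M[R]_n).
Hypothesis dQ : is_diag_mx Q.
Hypothesis p1 : (1 <= p)%E.

Local Notation B := (blockQnorm p Q).

Lemma B_ge0 (w : 'M[R]_(n, N)) : 0 <= B w.
Proof. by rewrite blockF //; apply: fn_ge0. Qed.

Lemma B_add (w z : 'M[R]_(n, N)) : B (w + z) <= B w + B z.
Proof.
rewrite !blockF //.
rewrite (_ : fn p _ = fn p (fun ik : 'I_N * 'I_n => Q ik.2 ik.2 * w ik.2 ik.1 + Q ik.2 ik.2 * z ik.2 ik.1)).
  exact: fn_triangle.
by apply: fn_ext => ik; rewrite mxE mulrDr.
Qed.

Lemma B_scale (w : 'M[R]_(n, N)) a : 0 <= a -> B (a *: w) = a * B w.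
Proof.
move=> a0; rewrite !blockF // -fn_scale //; apply: fn_ext => ik.
by rewrite mxE mulrCA.
Qed.

Lemma B_opp (w : 'M[R]_(n, N)) : B (- w) = B w.
Proof.
rewrite !blockF //; apply: fn_eq_abs => // ik; by rewrite mxE mulrN normrN.
Qed.

Lemma B_sub_le (w z : 'M[R]_(n, N)) : B w <= B z + B (w - z).
Proof.
have -> : B w = B (w - z + z) by rewrite addrNK.
by rewrite addrC; apply: B_add.
Qed.

Lemma B_dist (w z : 'M[R]_(n, N)) : `|B w - B z| <= B (w - z).
Proof.
have h1 := B_sub_le w z; have h2 := B_sub_le z w.
have h3 : B (z - w) = B (w - z) by rewrite -opprB B_opp.
rewrite h3 in h2.
rewrite ler_norml; apply/andP; split; lra.
Qed.

Definition Cq := (#|{: 'I_N * 'I_n}|%:R + 1) * \sum_k `|Q k k|.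

Lemma Cq_ge0 : 0 <= Cq.
Proof.
rewrite /Cq mulr_ge0 // ?sumr_ge0 // addr_ge0 //.
Qed.

Lemma mx_entry_le (w : 'M[R]_(n, N)) k i : `|w k i| <= `|w|.
Proof.
change (`|w k i| <= mx_norm w); rewrite mx_normrE.
by rewrite (le_bigmax _ (fun ij : 'I_n * 'I_N => `|w ij.1 ij.2|) (k, i)).
Qed.

Lemma B_bound (w : 'M[R]_(n, N)) : B w <= Cq * `|w|.
Proof.
rewrite blockF // /Cq -mulrA; apply: fn_bound => //.
  by rewrite mulr_ge0 // sumr_ge0.
move=> [i k] /=; rewrite normrM; apply: ler_pM => //.
  by apply: (@term_le_sum _ _ (fun k => `|Q k k|)).
exact: mx_entry_le.
Qed.

End FN3.

Section Jensen.
Variable R : realType.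

Lemma powR_sub (r g z : R) : 1 <= r -> 0 <= g -> g <= 1 -> 0 <= z ->
  (g * z) `^ r <= g * z `^ r.
Proof.
move=> r1 g0 g1 z0.
have [->|gn] := eqVneq g 0.
  by rewrite !mul0r powR0 // gt_eqF // (lt_le_trans ltr01 r1).
apply: ge1r_powRZ => //; by rewrite lt0r gn g0.
Qed.

Lemma subconv (r a b x y : R) : 1 <= r -> 0 <= a -> 0 <= b -> a + b <= 1 ->
  0 <= x -> 0 <= y -> (a * x + b * y) `^ r <= a * x `^ r + b * y `^ r.
Proof.
move=> r1 a0 b0 ab1 x0 y0.
have [s0|sn] := eqVneq (a + b) 0.
  have a0' : a = 0 by lra.
  have b0' : b = 0 by lra.
  by rewrite a0' b0' !mul0r addr0 powR0 // gt_eqF // (lt_le_trans ltr01 r1).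
have sp : 0 < a + b by rewrite lt0r sn addr_ge0.
have [t [et t0 t1]] : exists t, [/\ t = a / (a + b), 0 <= t & t <= 1].
  exists (a / (a + b)); split => //; first by rewrite divr_ge0 // ltW.
  by rewrite ler_pdivrMr // mul1r lerDl.
have e1 : a * x + b * y = (a + b) * (t * x + (1 - t) * y).
  rewrite et; field; exact: sn.
have Z0 : 0 <= t * x + (1 - t) * y by rewrite addr_ge0 // mulr_ge0 // subr_ge0.
rewrite e1; apply: (le_trans (powR_sub r1 (ltW sp) ab1 Z0)).
apply: (le_trans (ler_wpM2l (ltW sp) (conv2 r1 t0 t1 x0 y0))).
rewrite et le_eqVlt; apply/orP; left; apply/eqP; field; exact: sn.
Qed.

Lemma jensen (r : R) (m : nat) (lam x : 'I_m -> R) : 1 <= r ->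
  (forall j, 0 <= lam j) -> (forall j, 0 <= x j) -> \sum_j lam j <= 1 ->
  (\sum_j lam j * x j) `^ r <= \sum_j lam j * x j `^ r.
Proof.
move=> r1; elim: m lam x => [|m IH] lam x l0 x0 ls.
  by rewrite !big_ord0 powR0 // gt_eqF // (lt_le_trans ltr01 r1).
rewrite !big_ord_recl /=.
rewrite big_ord_recl /= in ls.
set La := \sum_(i < m) lam (lift ord0 i) in ls *.
have La0 : 0 <= La by apply: sumr_ge0 => i _.
have [Lz|Ln] := eqVneq La 0.
  have hz : forall i : 'I_m, lam (lift ord0 i) = 0.
    by move=> i; apply: (psumr_eq0P (P := predT) (F := fun i => lam (lift ord0 i))).
  rewrite !big1 ?addr0; try by move=> i _; rewrite hz mul0r.
  by apply: powR_sub => //; lra.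
have Lp : 0 < La by rewrite lt0r Ln La0.
pose lam' := fun i : 'I_m => lam (lift ord0 i) / La.
have IH' := IH lam' (fun i => x (lift ord0 i)).
have hl' : forall j, 0 <= lam' j by move=> j; rewrite /lam' divr_ge0.
have hs : \sum_j lam' j <= 1.
  by rewrite /lam' -mulr_suml -/La mulfV.
have hx : forall j, 0 <= x (lift ord0 j) by [].
have := IH' hl' hx hs.
set Y := \sum_j lam' j * x (lift ord0 j).
have Y0 : 0 <= Y by apply: sumr_ge0 => j _; rewrite mulr_ge0.
have eY : \sum_(i < m) lam (lift ord0 i) * x (lift ord0 i) = La * Y.
  rewrite /Y mulr_sumr; apply: eq_bigr => j _; rewrite /lam'; field; exact: Ln.
have eZ : \sum_(i < m) lam (lift ord0 i) * x (lift ord0 i) `^ r =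
   La * \sum_j lam' j * x (lift ord0 j) `^ r.
  rewrite mulr_sumr; apply: eq_bigr => j _; rewrite /lam'; field; exact: Ln.
move=> hY; rewrite eY eZ.
apply: (le_trans (subconv r1 (l0 ord0) La0 ls (x0 ord0) Y0)).
by rewrite lerD2l; apply: ler_wpM2l.
Qed.

End Jensen.

Section Contract.
Variable R : realType.
Variables (n N : nat) (D : 'M[R]_n) (L : 'M[R]_N).
Hypothesis dD : is_diag_mx D.
Hypothesis Dp : forall k, 0 < D k k.
Hypothesis LT : L^T = L.
Hypothesis Loff : forall i j, i != j -> L i j <= 0.
Hypothesis L1 : L *m (const_mx 1 : 'cV[R]_N) = 0.

Lemma kron_entry (w : 'M[R]_(n, N)) k i :
  kron_apply L D w k i = \sum_j L i j * D k k * w k j.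
Proof.
rewrite mxE; apply: eq_bigr => j _; rewrite (bigD1 k) //= big1 ?addr0 // => l lk.
by rewrite (is_diag_mxP dD k l) ?mulr0 ?mul0r // eq_sym.
Qed.

Lemma Lrow i : \sum_j L i j = 0.
Proof.
have h : (L *m (const_mx 1 : 'cV[R]_N)) i ord0 = 0 by rewrite L1 mxE.
rewrite mxE in h; apply: (etrans _ h); apply: eq_bigr => j _; by rewrite mxE mulr1.
Qed.

Lemma Lsym i j : L i j = L j i.
Proof. by rewrite -{1}LT mxE. Qed.

Lemma Lcol j : \sum_i L i j = 0.
Proof. by apply: (etrans _ (Lrow j)); apply: eq_bigr => i _; rewrite Lsym. Qed.

Lemma Ldiag_ge0 i : 0 <= L i i.
Proof.
have := Lrow i; rewrite (bigD1 i) //= => h.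
have : \sum_(j | j != i) L i j <= 0.
  by rewrite -oppr_ge0 -sumrN; apply: sumr_ge0 => j ji; rewrite oppr_ge0 Loff // eq_sym.
lra.
Qed.

Definition TT := 1 + \sum_k \sum_i D k k * L i i.
Definition s0 := TT^-1.

Lemma TT_gt : forall k i, D k k * L i i <= TT.
Proof.
move=> k i; rewrite /TT.
have h1 : D k k * L i i <= \sum_i D k k * L i i.
  by apply: (@term_le_sum _ _ (fun i => D k k * L i i)) => j; exact: mulr_ge0 (ltW (Dp _)) (Ldiag_ge0 _).
have h2 : \sum_i D k k * L i i <= \sum_k \sum_i D k k * L i i.
  apply: (@term_le_sum _ _ (fun k => \sum_i D k k * L i i)) => k'.
  by apply: sumr_ge0 => j _; exact: mulr_ge0 (ltW (Dp _)) (Ldiag_ge0 _).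
lra.
Qed.

Lemma TT_pos : 0 < TT.
Proof.
rewrite /TT; apply: (lt_le_trans ltr01); rewrite lerDl.
by apply: sumr_ge0 => k _; apply: sumr_ge0 => j _; exact: mulr_ge0 (ltW (Dp _)) (Ldiag_ge0 _).
Qed.

Lemma s0_pos : 0 < s0.
Proof. by rewrite /s0 invr_gt0 TT_pos. Qed.

Definition P (s : R) (k : 'I_n) (i j : 'I_N) : R := (i == j)%:R - s * D k k * L i j.

Lemma P_ge0 s k i j : 0 <= s -> s <= s0 -> 0 <= P s k i j.
Proof.
move=> s0' ss; rewrite /P.
have [<-|ij] := eqVneq i j; last first.
  rewrite sub0r oppr_ge0 -mulrA; apply: mulr_ge0_le0 => //; apply: mulr_ge0_le0; [exact: ltW (Dp _) | exact: Loff].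
rewrite ?eqxx subr_ge0 -mulrA (_ : true%:R = 1 :> R) //.
have h := TT_gt k i.
have h2 : s * (D k k * L i i) <= s0 * (D k k * L i i).
  by apply: ler_wpM2r => //; exact: mulr_ge0 (ltW (Dp _)) (Ldiag_ge0 _).
have h3 : s0 * (D k k * L i i) <= s0 * TT by apply: ler_wpM2l => //; exact: ltW s0_pos.
have h4 : s0 * TT = 1 by rewrite /s0 mulVf // gt_eqF // TT_pos.
rewrite h4 in h3.
lra.
Qed.

Lemma tR : (true%:R : R) = 1.
Proof. exact: mulr1n. Qed.

Lemma P_row s k i : \sum_j P s k i j = 1.
Proof.
rewrite /P sumrB (bigD1 i) //= big1; last by move=> j /negbTE; rewrite eq_sym => ->.
by rewrite ?eqxx ?tR addr0 -mulr_sumr Lrow mulr0 subr0.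
Qed.

Lemma P_col s k j : \sum_i P s k i j = 1.
Proof.
rewrite /P sumrB (bigD1 j) //= big1; last by move=> i /negbTE => ->.
by rewrite ?eqxx ?tR addr0 -mulr_sumr Lcol mulr0 subr0.
Qed.

Lemma delta_sum (f : 'I_N -> R) i : \sum_j (i == j)%:R * f j = f i.
Proof.
rewrite (bigD1 i) //= big1 => [|j ji]; first by rewrite ?eqxx ?tR mul1r addr0.
have -> : (i == j) = false by rewrite eq_sym (negbTE ji).
by rewrite mul0r.
Qed.

Lemma E_entry (w : 'M[R]_(n, N)) s k i :
  (w - s *: kron_apply L D w) k i = \sum_j P s k i j * w k j.
Proof.
have e : (w - s *: kron_apply L D w) k i = w k i - s * kron_apply L D w k i.
  by rewrite !mxE.
rewrite e kron_entry /P.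
rewrite [RHS](eq_bigr (fun j => (i == j)%:R * w k j - s * D k k * L i j * w k j)); last first.
  by move=> j _; rewrite mulrBl.
rewrite sumrB delta_sum; congr (_ - _); rewrite mulr_sumr; apply: eq_bigr => j _; ring.
Qed.

Variables (p : \bar R) (Q : 'M[R]_n).
Hypothesis dQ : is_diag_mx Q.
Hypothesis p1 : (1 <= p)%E.

Lemma entry_bound (w : 'M[R]_(n, N)) s k i : 0 <= s -> s <= s0 ->
  `|Q k k * (w - s *: kron_apply L D w) k i| <= \sum_j P s k i j * `|Q k k * w k j|.
Proof.
move=> sa sb; rewrite E_entry mulr_sumr.
apply: (le_trans (ler_norm_sum _ _ _)); apply: ler_sum => j _.
by rewrite mulrCA normrM ger0_norm // P_ge0.
Qed.

Lemma contract (w : 'M[R]_(n, N)) s : 0 <= s -> s <= s0 ->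
  blockQnorm p Q (w - s *: kron_apply L D w) <= blockQnorm p Q w.
Proof.
move=> sa sb; rewrite !blockF //.
case/p_cases: (p1) => [[r r1 ->]|->] /=; last first.
  apply: bigmax_le; first exact: bigmax_ge0.
  move=> [i k] _ /=; apply: (le_trans (entry_bound w k i sa sb)).
  set M := \big[Num.max/0]_ik `|Q ik.2 ik.2 * w ik.2 ik.1|.
  apply: (le_trans (y := \sum_j P s k i j * M)); last by rewrite -mulr_suml P_row mul1r.
  apply: ler_sum => j _; apply: ler_wpM2l; first exact: P_ge0.
  by rewrite /M (le_bigmax _ (fun ik : 'I_N * 'I_n => `|Q ik.2 ik.2 * w ik.2 ik.1|) (j, k)).
have r0 : 0 < r by apply: lt_le_trans r1.
have ri : 0 <= r^-1 by rewrite invr_ge0 ltW.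
apply: (ge0_ler_powR ri); rewrite ?nnegrE ?sumr_ge0 //; try by move=> ? _; exact: powR_ge0.
pose y k j := `|Q k k * w k j|.
have step : forall (ik : 'I_N * 'I_n),
   `|Q ik.2 ik.2 * (w - s *: kron_apply L D w) ik.2 ik.1| `^ r <=
   \sum_j P s ik.2 ik.1 j * y ik.2 j `^ r.
  move=> [i k] /=.
  apply: (le_trans (y := (\sum_j P s k i j * y k j) `^ r)).
    apply: (ge0_ler_powR (ltW r0)); rewrite ?nnegrE //; last exact: entry_bound.
    by apply: sumr_ge0 => j _; exact: mulr_ge0 (P_ge0 _ _ _ sa sb) (normr_ge0 _).
  apply: (jensen (lam := fun j => P s k i j) (x := fun j => y k j) r1); [move=> j; exact: P_ge0 | move=> j; exact: normr_ge0 | by rewrite le_eqVlt P_row eqxx].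
apply: (le_trans (ler_sum _ (fun ik _ => step ik))).
rewrite -(pair_big predT predT (fun i k => \sum_j P s k i j * y k j `^ r)) /=.
rewrite -(pair_big predT predT (fun j k => `|Q k k * w k j| `^ r)) /=.
rewrite exchange_big /= [X in _ <= X]exchange_big /=.
rewrite le_eqVlt; apply/orP; left; apply/eqP; apply: eq_bigr => k _.
rewrite exchange_big /=; apply: eq_bigr => j _.
by rewrite -mulr_suml P_col mul1r.
Qed.

End Contract.

Section ODE.
Variable R : realType.

Lemma near_right_ex (P : R -> Prop) : (\forall h \near 0^'+, P h) ->
  exists2 d : R, 0 < d & forall h, 0 < h -> h < d -> P h.
Proof.
rewrite near_withinE => /nbhs_ballP [e e0 He]; exists e => // h h0 he.
apply: He => //; rewrite /ball /= sub0r normrN gtr0_norm //.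
Qed.

Variables (n N : nat) (V : set 'cV[R]_n) (F : 'cV[R]_n -> 'cV[R]_n)
  (L : 'M[R]_N) (D : 'M[R]_n) (u : R -> 'M[R]_(n, N)).
Hypothesis hu : is_ode_solution V F L D u.

Lemma right_deriv (t : R) : 0 <= t ->
  (fun h => h^-1 *: (u (t + h) - u t)) @ 0^'+ --> rhs F L D (u t).
Proof.
case: hu => _ hd h0.
rewrite le_eqVlt => /orP [/eqP <-|tp].
  have -> : (fun h => h^-1 *: (u (0 + h) - u 0)) = (fun h => h^-1 *: (u h - u 0)).
    by apply: funext => h; rewrite add0r.
  exact: h0.
have [dv De] := hd t tp.
rewrite -De.
have -> : (fun h => h^-1 *: (u (t + h) - u t)) = (fun h => h^-1 *: ((u \o shift t) (h *: 1) - u t)).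
  apply: funext => h /=; have e : h *: (1 : R) = h := mulr1 h.
  by rewrite e (addrC h t).
exact: (cvg_dnbhs_at_right dv).
Qed.

Lemma cont_pos (t : R) : 0 < t -> u x @[x --> t] --> u t.
Proof.
case: hu => _ hd _ tp; have [dv _] := hd t tp.
exact: (differentiable_continuous (proj1 (derivable1_diffP u t) dv)).
Qed.

End ODE.

Section LL.
Variable R : realType.
Variables (p : \bar R) (n N : nat) (Q : 'M[R]_n) (V : set 'cV[R]_n)
  (F : 'cV[R]_n -> 'cV[R]_n) (c : R).
Hypothesis pQ : pos_diag Q.
Hypothesis p1 : (1 <= p)%E.

Lemma fn_zero (I : finType) : fn p (fun _ : I => 0) = 0.
Proof.
apply/le_anti; rewrite fn_ge0 andbT.
have := @fn_bound R p I (fun _ => 0) 0 p1 (lexx 0); rewrite mulr0; apply.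
by move=> i; rewrite normr0.
Qed.

Lemma pQnorm0 : pQnorm p Q 0 = 0.
Proof.
rewrite pQnormE; last by case: pQ.
by rewrite -(fn_zero 'I_n); apply: fn_ext => k; rewrite mxE mulr0.
Qed.

Lemma pQnorm_pos x y : x != y -> 0 < pQnorm p Q (x - y).
Proof.
move=> xy; rewrite lt0r; case: pQ => dQ Qp.
rewrite pQnormE // fn_ge0 andbT; apply/negP => /eqP h.
move/negP: xy; apply; apply/eqP/matrixP => k j; rewrite (ord1 j).
have := fn_eq0 k p1 h; rewrite !mxE => /eqP; rewrite mulf_eq0 (gt_eqF (Qp k)) /= subr_eq0.
by move/eqP.
Qed.

Lemma loglip_delta : logLip_eq p Q V F c -> forall e, 0 < e ->
  exists2 d, 0 < d & forall h, 0 < h -> h < d -> forall x y, V x -> V y ->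
    pQnorm p Q (x - y + h *: (F x - F y)) <= (1 + h * (c + e)) * pQnorm p Q (x - y).
Proof.
move=> /fine_cvgP [fin cv] e e0.
have lt' : \forall h \near 0^'+, (fine \o logLip_quot p Q V F) h < c + e.
  by apply: (cvgr_lt c cv); rewrite ltrDl.
have [d1 d10 H1] := near_right_ex fin.
have [d2 d20 H2] := near_right_ex lt'.
exists (Num.min d1 d2); first by rewrite lt_min d10 d20.
move=> h h0; rewrite lt_min => /andP [hd1 hd2] x y Vx Vy.
have [<-|xy] := eqVneq x y.
  rewrite subrr subrr scaler0 addr0 pQnorm0 mulr0 //.
have N0 := pQnorm_pos xy.
set N1 := pQnorm p Q (x - y + h *: (F x - F y)).
set N0' := pQnorm p Q (x - y).
have qle : ((h^-1 * (N1 / N0' - 1))%:E <= logLip_quot p Q V F h)%E.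
  apply: ereal_sup_ubound; exists x, y; split => //.
have fq := H1 h h0 hd1; have fl := H2 h h0 hd2.
rewrite /= in fl.
rewrite -(fineK fq) lee_fin in qle.
have q1 : h^-1 * (N1 / N0' - 1) <= c + e := le_trans qle (ltW fl).
have q2 : N1 / N0' - 1 <= h * (c + e).
  by move: (ler_wpM2l (ltW h0) q1); rewrite mulrA mulfV ?gt_eqF // mul1r.
have -> : N1 = (N1 / N0') * N0' by rewrite divfK ?gt_eqF.
rewrite ler_pM2r //; lra.
Qed.

End LL.

Lemma zmod_id (Z : zmodType) (a b c d : Z) : (a - c) - (b - d) = (a - b) - (c - d).
Proof. by rewrite !opprB addrACA [RHS]addrACA (addrC (- c)). Qed.

Section Main1.
Variable R : realType.
Variables (n N : nat) (V : set 'cV[R]_n) (F : 'cV[R]_n -> 'cV[R]_n)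
  (D : 'M[R]_n) (L : 'M[R]_N) (p : \bar R) (Q : 'M[R]_n) (c : R).
Hypothesis pQ : pos_diag Q.
Hypothesis p1 : (1 <= p)%E.
Hypothesis hl : logLip_eq p Q V F c.

Lemma blockP (w : 'M[R]_(n, N)) : blockQnorm p Q w = fn p (fun i => pQnorm p Q (col i w)).
Proof.
transitivity (fn p (fun i : 'I_N => (\col_(i < N) pQnorm p Q (col i w)) i ord0)); first by [].
by apply: fn_ext => i; rewrite mxE.
Qed.

Lemma col_lin (U W : 'M[R]_(n, N)) t i :
  col i (U - W + t *: (Ftilde F U - Ftilde F W)) =
  col i U - col i W + t *: (F (col i U) - F (col i W)).
Proof. by apply/matrixP => k j; rewrite (ord1 j) !mxE. Qed.

Lemma colB (U W : 'M[R]_(n, N)) i : col i (U - W) = col i U - col i W.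
Proof. by apply/matrixP => k j; rewrite !mxE. Qed.

Lemma kronB (U W : 'M[R]_(n, N)) : kron_apply L D (U - W) = kron_apply L D U - kron_apply L D W.
Proof.
apply/matrixP => k i; rewrite !mxE -sumrB; apply: eq_bigr => j _.
rewrite -sumrB; apply: eq_bigr => l _; rewrite !mxE; ring.
Qed.

Lemma rhs_diff (U W : 'M[R]_(n, N)) :
  rhs F L D U - rhs F L D W = (Ftilde F U - Ftilde F W) - kron_apply L D (U - W).
Proof. by rewrite /rhs kronB zmod_id. Qed.

Lemma block_loglip e : 0 < e -> exists2 d, 0 < d & forall t, 0 < t -> t < d ->
  forall U W : 'M[R]_(n, N), (forall i, V (col i U)) -> (forall i, V (col i W)) ->
  0 <= 1 + t * (c + e) ->
  blockQnorm p Q (U - W + t *: (Ftilde F U - Ftilde F W)) <= (1 + t * (c + e)) * blockQnorm p Q (U - W).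
Proof.
move=> e0; have [d d0 H] := loglip_delta pQ p1 hl e0.
exists d => // t t0 td U W VU VW k0.
rewrite !blockP -fn_scale //; apply: fn_mono => // i.
rewrite col_lin colB !ger0_norm ?mulr_ge0 //; try exact: fn_ge0.
  exact: H.
Qed.

End Main1.

Section Main2.
Variable R : realType.
Variables (n N : nat) (V : set 'cV[R]_n) (F : 'cV[R]_n -> 'cV[R]_n)
  (D : 'M[R]_n) (L : 'M[R]_N) (p : \bar R) (Q : 'M[R]_n) (c : R)
  (u v : R -> 'M[R]_(n, N)).
Hypothesis pD : pos_diag D.
Hypothesis gl : graph_laplacian L.
Hypothesis p1 : (1 <= p)%E.
Hypothesis pQ : pos_diag Q.
Hypothesis hl : logLip_eq p Q V F c.
Hypothesis hu : is_ode_solution V F L D u.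
Hypothesis hv : is_ode_solution V F L D v.

Lemma half_split (w X Y : 'M[R]_(n, N)) h :
  w + h *: (X - Y) = 2^-1 *: (w + (2 * h) *: X) + 2^-1 *: (w - (2 * h) *: Y).
Proof. by apply/matrixP => k i; rewrite !mxE; field. Qed.

Lemma scale_split (U : 'M[R]_(n, N)) x y h : h != 0 ->
  U - x = h *: (h^-1 *: (U - x) - y) + h *: y.
Proof. by move=> h0; rewrite -scalerDr subrK scalerA mulfV // scale1r. Qed.

Local Notation B := (blockQnorm p Q).

Lemma dini_step (e eta s : R) : 0 < e -> 0 < eta -> 0 <= s ->
  exists2 d, 0 < d & forall h, 0 < h -> h < d ->
    0 <= 1 + h * (c + e) /\
    B (u (s + h) - v (s + h)) <= (1 + h * (c + e)) * B (u s - v s) + h * eta.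
Proof.
move=> e0 et0 s0'.
case: pD => dD Dp; case: gl => LT Loff L1; case: (pQ) => dQ Qp.
have [Vu _ _] := hu; have [Vv _ _] := hv.
have [d1 d10 H1] := block_loglip N pQ p1 hl e0.
have sp := s0_pos Dp Loff L1.
have Cq0 := Cq_ge0 N Q.
set C := Cq N Q.
have [eta' [eta'0 etaC]] : exists eta', 0 < eta' /\ C * (eta' + eta') <= eta.
  exists (eta / (2 * (C + 1))); split; first by rewrite divr_gt0 // mulr_gt0 // ltr_pwDr.
  have -> : eta / (2 * (C + 1)) + eta / (2 * (C + 1)) = eta / (C + 1).
    by field; rewrite gt_eqF // ltr_pwDr.
  rewrite mulrCA ger_pMr //.
  by rewrite ler_pdivrMr ?mul1r ?lerDl // ltr_pwDr.
have [d2 d20 H2] := near_right_ex (cvgr_dist_lt _ _ (right_deriv hu s0') _ eta'0).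
have [d3 d30 H3] := near_right_ex (cvgr_dist_lt _ _ (right_deriv hv s0') _ eta'0).
set d4 := (2 * (`|c + e| + 1))^-1.
have d40 : 0 < d4 by rewrite /d4 invr_gt0 mulr_gt0 // ltr_pwDr.
exists (Num.min (d1 / 2) (Num.min (s0 D L / 2) (Num.min d2 (Num.min d3 d4)))).
  by rewrite !lt_min !divr_gt0 // d20 d30 d40.
move=> h h0; rewrite !lt_min => /and5P [hd1 hs hd2 hd3 hd4].
have h2 : 2 * h * `|c + e| < 1.
  move: hd4; rewrite /d4 -[h < _](ltr_pM2l (x := 2 * (`|c + e| + 1))); last first.
    by rewrite mulr_gt0 // ltr_pwDr.
  rewrite mulfV ?gt_eqF ?mulr_gt0 ?ltr_pwDr // => h'.
  have := normr_ge0 (c + e); nra.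
have hce : - (2 * h * `|c + e|) <= 2 * h * (c + e).
  rewrite -mulrN; apply: ler_wpM2l; first by rewrite mulr_ge0 // ltW.
  by rewrite lerNl -normrN ler_norm.
have k1 : 0 <= 1 + h * (c + e) by lra.
have k2 : 0 <= 1 + (2 * h) * (c + e) by lra.
split => //.
set w := u s - v s.
set ru := rhs F L D (u s); set rv := rhs F L D (v s).
set qu := h^-1 *: (u (s + h) - u s); set qv := h^-1 *: (v (s + h) - v s).
have hn : h != 0 by rewrite gt_eqF.
have Eq : u (s + h) - v (s + h) = (w + h *: (ru - rv)) + h *: ((qu - ru) - (qv - rv)).
  have eu : u (s + h) = u s + h *: qu.
    by rewrite /qu scalerA mulfV // scale1r (addrC (u s)) subrK.
  have ev : v (s + h) = v s + h *: qv.
    by rewrite /qv scalerA mulfV // scale1r (addrC (v s)) subrK.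
  rewrite eu ev /w; apply/matrixP => k i; rewrite !mxE; ring.
rewrite Eq.
apply: (le_trans (B_add dQ p1 _ _)).
rewrite (B_scale dQ p1 _ (ltW h0)).
have Rb : B ((qu - ru) - (qv - rv)) <= C * (eta' + eta').
  apply: (le_trans (B_bound dQ p1 _)); apply: ler_wpM2l => //.
  apply: (le_trans (ler_normB _ _)); apply: lerD.
    by rewrite distrC; apply: ltW; apply: H2.
  by rewrite distrC; apply: ltW; apply: H3.
have Ab : B (w + h *: (ru - rv)) <= (1 + h * (c + e)) * B w.
  rewrite /ru /rv rhs_diff -/w half_split.
  apply: (le_trans (B_add dQ p1 _ _)).
  have i2 : 0 <= (2:R)^-1 by rewrite invr_ge0 ler0n.
  rewrite !(B_scale dQ p1 _ i2).
  have X1 := H1 (2 * h) ltac:(lra) ltac:(lra) (u s) (v s)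
     (Vu s s0') (Vv s s0') k2.
  have X2 := contract dD Dp LT Loff L1 dQ p1 w (s := 2 * h) ltac:(lra) ltac:(lra).
  rewrite -/w in X1.
  have Bw := B_ge0 dQ p1 w.
  nra.
have Bh : h * B ((qu - ru) - (qv - rv)) <= h * eta.
  apply: ler_wpM2l; [exact: ltW | exact: le_trans Rb etaC].
lra.
Qed.

End Main2.

Section CI.
Variable R : realType.

Lemma cont_induction (phi g : R -> R) (T : R) : 0 <= T -> phi 0 <= g 0 ->
  (forall s, 0 < s -> s <= T -> (forall t, 0 <= t -> t < s -> phi t <= g t) -> phi s <= g s) ->
  (forall s, 0 <= s -> s < T -> phi s <= g s ->
     exists2 d, 0 < d & forall h, 0 < h -> h < d -> phi (s + h) <= g (s + h)) ->
  phi T <= g T.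
Proof.
move=> T0 h0 lc st.
pose S := [set s | 0 <= s <= T /\ forall t, 0 <= t -> t <= s -> phi t <= g t].
have S0 : S 0.
  split; first by rewrite lexx T0.
  by move=> t t0 t0'; have -> : t = 0 by apply/le_anti; rewrite t0 t0'.
have ubS : ubound S T by move=> s [/andP [_ ->]].
have hs : has_sup S by split; [exists 0 | exists T].
set sg := sup S.
have sg0 : 0 <= sg by apply: sup_upper_bound.
have sgT : sg <= T by apply: ge_sup => //; exists 0.
have below : forall t, 0 <= t -> t < sg -> phi t <= g t.
  move=> t t0 ts.
  have tp : 0 < sg - t by rewrite subr_gt0.
  have [s [_ Ss] hs'] := sup_adherent tp hs.
  apply: Ss => //; rewrite -/sg opprB addrC subrK in hs'; exact: ltW.
have at_sg : phi sg <= g sg.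
  have [->|sn] := eqVneq sg 0; first exact: h0.
  apply: lc => //; by rewrite lt0r sn sg0.
have Ssg : S sg.
  split; first by rewrite sg0 sgT.
  move=> t t0; rewrite le_eqVlt => /orP [/eqP ->|tl] //; exact: below.
have [sT|] := ltP sg T; last first.
  move=> Tsg; have -> : T = sg by apply/le_anti; rewrite Tsg sgT.
  exact: at_sg.
have [d d0 hd] := st sg sg0 sT at_sg.
pose h := Num.min d (T - sg) / 2.
have hp : 0 < h by rewrite /h divr_gt0 // lt_min d0 subr_gt0.
have hd' : h < d.
  have : Num.min d (T - sg) <= d by rewrite ge_min lexx.
  rewrite /h; lra.
have hT : h <= T - sg.
  have : Num.min d (T - sg) <= T - sg by rewrite ge_min lexx orbT.
  rewrite /h; have : 0 < Num.min d (T - sg) by rewrite lt_min d0 subr_gt0. lra.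
have : S (sg + h).
  split; first by apply/andP; split; lra.
  move=> t t0 tle; have [tsg|tsg] := leP t sg.
    by case: Ssg => _; apply.
  have -> : t = sg + (t - sg) by rewrite addrC subrK.
  apply: hd; lra.
move=> /(sup_upper_bound hs); rewrite -/sg; lra.
Qed.

Lemma left_closed_cont (phi g : R -> R) (s : R) : 0 < s ->
  phi x @[x --> s] --> phi s -> g x @[x --> s] --> g s ->
  (forall t, 0 <= t -> t < s -> phi t <= g t) -> phi s <= g s.
Proof.
move=> sp cp cg hb; rewrite leNgt; apply/negP => gl.
have dl : 0 < (phi s - g s) / 2 by rewrite divr_gt0 // subr_gt0.
have /nbhs_ballP [r r0 Hr] : nbhs s (fun t => `|phi s - phi t| < (phi s - g s) / 2 /\ `|g s - g t| < (phi s - g s) / 2).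
  exact: filterI (cvgr_dist_lt _ _ cp _ dl) (cvgr_dist_lt _ _ cg _ dl).
pose t := s - Num.min r s / 2.
have m0 : 0 < Num.min r s by rewrite lt_min r0 sp.
have mr : Num.min r s <= r by rewrite ge_min lexx.
have ms : Num.min r s <= s by rewrite ge_min lexx orbT.
have [H1 H2] : `|phi s - phi t| < (phi s - g s) / 2 /\ `|g s - g t| < (phi s - g s) / 2.
  apply: Hr; rewrite /ball /= /t opprB addrC subrK ger0_norm; lra.
have := hb t; rewrite /t => hh.
have := hh ltac:(lra) ltac:(lra).
move: H1 H2; rewrite !ltr_norml; rewrite -/t => /andP [a1 a2] /andP [b1 b2].
lra.
Qed.

Lemma expR_aff_cont (a K s : R) : (fun t => expR (a * t) * K) @ s --> expR (a * s) * K.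
Proof.
apply: cvgMl.
apply: (continuous_comp (f := fun t => a * t)).
  by apply: cvgMr; exact: cvg_id.
exact: continuous_expR.
Qed.

End CI.

Section PhiCont.
Variable R : realType.
Variables (n N : nat) (V : set 'cV[R]_n) (F : 'cV[R]_n -> 'cV[R]_n)
  (D : 'M[R]_n) (L : 'M[R]_N) (p : \bar R) (Q : 'M[R]_n)
  (u v : R -> 'M[R]_(n, N)).
Hypothesis p1 : (1 <= p)%E.
Hypothesis dQ : is_diag_mx Q.
Hypothesis hu : is_ode_solution V F L D u.
Hypothesis hv : is_ode_solution V F L D v.

Lemma phi_cont (s : R) : 0 < s ->
  blockQnorm p Q (u x - v x) @[x --> s] --> blockQnorm p Q (u s - v s).
Proof.
move=> sp; apply/cvgrPdist_lt => eta eta0.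
have Cq0 := Cq_ge0 N Q.
set C := Cq N Q.
have [eta' [eta'0 etaC]] : exists eta', 0 < eta' /\ C * (eta' + eta') < eta.
  exists (eta / (2 * (C + 1))); split; first by rewrite divr_gt0 // mulr_gt0 // ltr_pwDr.
  have -> : eta / (2 * (C + 1)) + eta / (2 * (C + 1)) = eta / (C + 1).
    by field; rewrite gt_eqF // ltr_pwDr.
  rewrite mulrCA gtr_pMr //.
  by rewrite ltr_pdivrMr ?mul1r ?ltrDl // ltr_pwDr.
near=> t.
have h1 : `|u s - u t| < eta'.
  by near: t; exact: (cvgr_dist_lt _ _ (cont_pos hu sp) _ eta'0).
have h2 : `|v s - v t| < eta'.
  by near: t; exact: (cvgr_dist_lt _ _ (cont_pos hv sp) _ eta'0).
apply: (le_lt_trans (B_dist dQ p1 _ _)).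
apply: (le_lt_trans (B_bound dQ p1 _)).
have e : u s - v s - (u t - v t) = (u s - u t) - (v s - v t) by rewrite zmod_id.
rewrite e; apply: (le_lt_trans _ etaC); apply: ler_wpM2l => //.
apply: (le_trans (ler_normB _ _)); apply: lerD; exact: ltW.
Unshelve. all: by end_near.
Qed.

End PhiCont.

Unset Implicit Arguments.
Theorem theorem4 (R : realType) (n N : nat) (V : set 'cV[R]_n)
  (F : 'cV[R]_n -> 'cV[R]_n) (D : 'M[R]_n) (L : 'M[R]_N)
  (p : \bar R) (Q : 'M[R]_n) (c : R) (u v : R -> 'M[R]_(n, N)) :
  convex_subset V ->
  glob_lipschitz_on V F ->
  pos_diag D ->
  graph_laplacian L ->
  (1 <= p)%E ->
  pos_diag Q ->
  logLip_eq p Q V F c ->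
  is_ode_solution V F L D u ->
  is_ode_solution V F L D v ->
  forall t : R, 0 <= t ->
    blockQnorm p Q (u t - v t) <= expR (c * t) * blockQnorm p Q (u 0 - v 0).
Proof.
move=> _ _ pD gl p1 pQ hl hu hv T T0.
have dQ : is_diag_mx Q by case: pQ.
set phi := fun x => blockQnorm p Q (u x - v x).
have phi0 : 0 <= phi 0 by apply: B_ge0.
have claim : forall e, 0 < e -> phi T <= expR ((c + 2 * e) * T) * (phi 0 + e).
  move=> e e0.
  pose g := fun x => expR ((c + 2 * e) * x) * (phi 0 + e).
  have gpos : forall x, 0 < g x by move=> x; rewrite /g mulr_gt0 ?expR_gt0 // ltr_pwDr.
  apply: (cont_induction (phi := phi) (g := g) T0).
  - by rewrite /g mulr0 expR0 mul1r lerDl ltW.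
  - move=> s sp sT hb.
    have pc := phi_cont p1 dQ hu hv sp.
    apply: (@left_closed_cont R phi g s sp) => //.
    have := expR_aff_cont (a := c + 2 * e) (K := phi 0 + e) (s := s).
    rewrite /g; exact.
  - move=> s s0 sT hs.
    have eta0 : 0 < e * g s by rewrite mulr_gt0.
    have [d d0 Hd] := dini_step pD gl p1 pQ hl hu hv e0 eta0 s0.
    exists d => // h h0 hd; have [k1 Hs] := Hd h h0 hd.
    apply: (le_trans Hs).
    have gsh : g (s + h) = g s * expR ((c + 2 * e) * h).
      by rewrite /g /= (mulrDr (c + 2 * e) s h) expRD mulrAC.
    rewrite gsh.
    have ex := expR_ge1Dx ((c + 2 * e) * h).
    have gs0 := gpos s.
    have A : (1 + h * (c + e)) * phi s <= (1 + h * (c + e)) * g s by apply: ler_wpM2l.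
    have B : g s * (1 + (c + 2 * e) * h) <= g s * expR ((c + 2 * e) * h) by apply: ler_wpM2l => //; exact: ltW.
    have E : (1 + h * (c + e)) * g s + h * (e * g s) = g s * (1 + (c + 2 * e) * h) by ring.
    apply: (le_trans (y := (1 + h * (c + e)) * g s + h * (e * g s))); first by rewrite lerD2r.
    by rewrite E.
have Gc : (fun e => expR ((c + 2 * e) * T) * (phi 0 + e)) @ 0 --> expR (c * T) * phi 0.
  have -> : (fun e => expR ((c + 2 * e) * T) * (phi 0 + e)) =
            (fun e => expR (c * T) * (expR (2 * T * e) * 1) * (phi 0 + e)).
    by apply: funext => x; rewrite mulr1 -expRD mulrDl (mulrAC 2 x T).
  have -> : expR (c * T) * phi 0 = expR (c * T) * (expR (2 * T * 0) * 1) * (phi 0 + 0).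
    by rewrite mulr0 expR0 mulr1 mulr1 addr0.
  apply: cvgM.
    apply: cvgMr; exact: (expR_aff_cont (a := 2 * T) (K := 1) (s := 0)).
  by apply: cvgD; [exact: cvg_cst | exact: cvg_id].
rewrite leNgt; apply/negP => hlt.
have Gr := cvg_at_right_filter Gc.
have [d d0 Hd] := near_right_ex (cvgr_lt _ Gr _ hlt).
have := claim (d / 2) ltac:(by rewrite divr_gt0).
have := Hd (d / 2) ltac:(by rewrite divr_gt0) ltac:(lra).
move=> h1 h2; have := lt_le_trans h1 h2; by rewrite ltxx.
Qed.
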